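(* Let $S\in\mathcal S(n)$, let $k\le n$, let $L\ge n$ with $\tau=L/\sqrt{nk}$ and suppose $M=2L/\tau+k$ is an integer. Let $P_0$ be a $\tau$-post and suppose the $k\times M$ $\tau$-fence-tree with root $P_0$ exists in $S$, with nodes $P_i^m=(X_i^m,Y_i^m)$, and put $\Delta x=X_k^M-X_1^1$. Then (a) the path in the tree from the root $P_1^1$ to $P_k^M$ (the concatenation of the tree edges along it) has length at most $4L+3\tau\Delta x$; and (b) the total length of all edges of the tree is at most $k(3L+3\tau\Delta x)$.
   Context: Setting: $\mathcal S(n)$ is the class of scenes in the plane consisting of finitely many non-overlapping axis-parallel rectangular obstacles of width and height at least $1$, with integral corner $x$-coordinates, start $s=(0,0)$ and target the vertical line (''wall'') $x=n$. Up/down/right mean the $+y$/$-y$/$+x$ directions. A $\tau$-post is a vertical segment of height $2\tau$ contained in the left edge of an obstacle; it is identified with its center point. A $\tau$-path from a point $(x,y_0)$ is the path obtained by moving right along the line $y=y_0$: when an obstacle is hit whose nearest corner is at distance less than $\tau$, the path goes around that corner to the point on the opposite (right) side of the obstacle with $y$-coordinate $y_0$ and continues right; when an obstacle is hit whose nearest corner is at distance at least $\tau$, the path stops, and the $\tau$-post centered at the hit point is the end of the path; if the wall is reached the path stops there. For a $\tau$-post $P$, its up-child (resp. down-child) is the $\tau$-post at the end of the $\tau$-path starting from the top (resp. bottom) endpoint of $P$ (undefined if that $\tau$-path reaches the wall); the up-edge (resp. down-edge) from $P$ to that child is the vertical segment of length $\tau$ from the center of $P$ to its top (resp. bottom) endpoint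 followed by that $\tau$-path. The $k\times M$ $\tau$-fence-tree with root $P_0$ is the binary tree with nodes $P_i^m$, $1\le i\le k$, $1\le m\le M$, defined by: $P_1^1=P_0$; $P_1^m$ is the up-child of $P_1^{m-1}$ for $m\ge2$; $P_i^1$ is the down-child of $P_{i-1}^1$ for $i\ge2$; and for $i,m\ge2$, $P_i^m$ is the down-child of $P_{i-1}^m$ if $X_{i-1}^m> X_i^{m-1}$, and the up-child of $P_i^{m-1}$ otherwise. Its edges are the corresponding up- and down-edges from each node to its children. The tree is said to exist in $S$ if all these children are defined (no $\tau$-path used reaches the wall). *)

(* Defs.v *)
From Stdlib Require Import Reals Lra List ZArith.
Import ListNotations.
Open Scope R_scope.

Record rect := Rect { rx1 : R; rx2 : R; ry1 : R; ry2 : R }.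

Definition scene := list rect.

Definition non_overlapping (o o' : rect) : Prop :=
  rx2 o <= rx1 o' \/ rx2 o' <= rx1 o \/ ry2 o <= ry1 o' \/ ry2 o' <= ry1 o.

Definition good_rect (o : rect) : Prop :=
  rx2 o - rx1 o >= 1 /\ ry2 o - ry1 o >= 1 /\
  (exists z : Z, rx1 o = IZR z) /\ (exists z : Z, rx2 o = IZR z).

(* The class S(n) (start s = (0,0), target the wall x = n). *)
Definition in_S (n : nat) (sc : scene) : Prop :=
  Forall good_rect sc /\ ForallOrdPairs non_overlapping sc.

(* Moving right along y = y0 from abscissa x, obstacle o is the first one hit. *)
Definition first_hit (sc : scene) (x y0 : R) (o : rect) : Prop :=
  In o sc /\ x <= rx1 o /\ ry1 o < y0 < ry2 o /\
  forall o', In o' sc -> x <= rx1 o' -> ry1 o' < y0 < ry2 o' -> rx1 o <= rx1 o'.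

Definition corner_dist (o : rect) (y0 : R) : R := Rmin (y0 - ry1 o) (ry2 o - y0).

(* tau_path sc n tau x y0 q len : the tau-path from (x,y0) ends (without reaching
   the wall x = n) at the tau-post with center q, and has length len. *)
Inductive tau_path (sc : scene) (n : nat) (tau : R) : R -> R -> R * R -> R -> Prop :=
| tp_stop : forall x y0 o,
    first_hit sc x y0 o -> rx1 o < INR n -> corner_dist o y0 >= tau ->
    tau_path sc n tau x y0 (rx1 o, y0) (rx1 o - x)
| tp_around : forall x y0 o q len,
    first_hit sc x y0 o -> rx1 o < INR n -> corner_dist o y0 < tau ->
    rx2 o < INR n ->
    tau_path sc n tau (rx2 o) y0 q len ->
    tau_path sc n tau x y0 q
      ((rx1 o - x) + 2 * corner_dist o y0 + (rx2 o - rx1 o) + len).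

(* A tau-post (identified with its center p): a vertical segment of height 2 tau
   contained in the left edge of an obstacle. *)
Definition tau_post (sc : scene) (tau : R) (p : R * R) : Prop :=
  exists o, In o sc /\ fst p = rx1 o /\ ry1 o <= snd p - tau /\ snd p + tau <= ry2 o.

Definition up_edge (sc : scene) (n : nat) (tau : R) (p c : R * R) (len : R) : Prop :=
  exists l, tau_path sc n tau (fst p) (snd p + tau) c l /\ len = tau + l.

Definition down_edge (sc : scene) (n : nat) (tau : R) (p c : R * R) (len : R) : Prop :=
  exists l, tau_path sc n tau (fst p) (snd p - tau) c l /\ len = tau + l.

(* P i m = center of node P_i^m ; E i m = length of the tree edge entering P_i^m
   (for (i,m) <> (1,1)).  fence_tree ... holds iff these are the nodes and edge
   lengths of the k x M tau-fence-tree with root P 1 1, which exists in sc. *)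
Definition fence_tree (sc : scene) (n : nat) (tau : R) (k M : nat)
    (P : nat -> nat -> R * R) (E : nat -> nat -> R) : Prop :=
  tau_post sc tau (P 1%nat 1%nat) /\
  (forall m, (2 <= m <= M)%nat -> up_edge sc n tau (P 1%nat (m-1)%nat) (P 1%nat m) (E 1%nat m)) /\
  (forall i, (2 <= i <= k)%nat -> down_edge sc n tau (P (i-1)%nat 1%nat) (P i 1%nat) (E i 1%nat)) /\
  (forall i m, (2 <= i <= k)%nat -> (2 <= m <= M)%nat ->
     if Rlt_dec (fst (P i (m-1)%nat)) (fst (P (i-1)%nat m))
     then down_edge sc n tau (P (i-1)%nat m) (P i m) (E i m)
     else up_edge sc n tau (P i (m-1)%nat) (P i m) (E i m)).

Definition parent (P : nat -> nat -> R * R) (i m : nat) : nat * nat :=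
  if Nat.eqb i 1 then (1%nat, (m-1)%nat)
  else if Nat.eqb m 1 then ((i-1)%nat, 1%nat)
  else if Rlt_dec (fst (P i (m-1)%nat)) (fst (P (i-1)%nat m)) then ((i-1)%nat, m)
  else (i, (m-1)%nat).

(* length of the tree path from the root (1,1) to node (i,m); fuel >= i+m-2 suffices *)
Fixpoint root_path_len (fuel : nat) (P : nat -> nat -> R * R) (E : nat -> nat -> R)
    (i m : nat) : R :=
  match fuel with
  | O => 0
  | S f =>
      if andb (Nat.eqb i 1) (Nat.eqb m 1) then 0
      else E i m + root_path_len f P E (fst (parent P i m)) (snd (parent P i m))
  end.

Definition sumR (l : list R) : R := fold_right Rplus 0 l.

Definition total_len (k M : nat) (E : nat -> nat -> R) : R :=
  sumR (map (fun i => sumR (map (fun m =>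
           if andb (Nat.eqb i 1) (Nat.eqb m 1) then 0 else E i m) (seq 1 M)))
       (seq 1 k)).

(* Main.v *)
Require Import Defs.
From Stdlib Require Import Reals List Lra Lia Psatz.
Import ListNotations.
Open Scope R_scope.

Lemma tp_bound sc n tau x y0 q len :
  Forall good_rect sc -> tau >= 1 -> tau_path sc n tau x y0 q len ->
  x <= fst q /\ len <= 3 * tau * (fst q - x).
Proof.
  intros Hg Ht H; induction H as [x y0 o Hf Hl Hc|x y0 o q len Hf Hl Hc Hl2 Hp IH].
  - destruct Hf as [_ [Hx _]]. simpl. split; [lra|]. nra.
  - destruct Hf as [Hin [Hx [Hy _]]]. destruct IH as [IH1 IH2].
    rewrite Forall_forall in Hg. destruct (Hg o Hin) as [Hw _].
    assert (rx1 o <= rx2 o) by lra.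
    split; [lra|].
    assert (tau * (rx1 o - x) >= rx1 o - x) by nra.
    assert (tau * (rx2 o - rx1 o) >= rx2 o - rx1 o) by nra.
    assert (tau * (rx2 o - rx1 o) >= tau) by nra.
    nra.
Qed.

Lemma up_bound sc n tau p c len :
  Forall good_rect sc -> tau >= 1 -> up_edge sc n tau p c len ->
  fst p <= fst c /\ len <= tau + 3 * tau * (fst c - fst p).
Proof.
  intros Hg Ht [l [Hl ->]]. destruct (tp_bound _ _ _ _ _ _ _ Hg Ht Hl). lra.
Qed.

Lemma down_bound sc n tau p c len :
  Forall good_rect sc -> tau >= 1 -> down_edge sc n tau p c len ->
  fst p <= fst c /\ len <= tau + 3 * tau * (fst c - fst p).
Proof.
  intros Hg Ht [l [Hl ->]]. destruct (tp_bound _ _ _ _ _ _ _ Hg Ht Hl). lra.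
Qed.

Lemma sumR_app l1 l2 : sumR (l1 ++ l2) = sumR l1 + sumR l2.
Proof. induction l1; simpl; [lra|]. rewrite IHl1; lra. Qed.

Lemma sumR_map_le {A} (f : A -> R) c l :
  (forall x, In x l -> f x <= c) -> sumR (map f l) <= INR (length l) * c.
Proof.
  induction l as [|a l IH]; intros H; [simpl; lra|].
  change (sumR (map f (a::l))) with (f a + sumR (map f l)).
  change (length (a::l)) with (S (length l)). rewrite S_INR. assert (f a <= c) by (apply H; left; auto).
  assert (sumR (map f l) <= INR (length l) * c) by (apply IH; intros; apply H; right; auto).
  lra.
Qed.

Theorem theorem2 (n : nat) (sc : scene) (k : nat) (L tau : R) (M : nat)
    (P : nat -> nat -> R * R) (E : nat -> nat -> R) :
  in_S n sc ->
  (1 <= k)%nat -> (k <= n)%nat ->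
  L >= INR n ->
  tau = L / sqrt (INR n * INR k) ->
  INR M = 2 * L / tau + INR k ->
  fence_tree sc n tau k M P E ->
  let dx := fst (P k M) - fst (P 1%nat 1%nat) in
  root_path_len (k + M) P E k M <= 4 * L + 3 * tau * dx /\
  total_len k M E <= INR k * (3 * L + 3 * tau * dx).
Proof.
  intros [Hg _] Hk1 Hkn HL Htau HM [Hroot [H1 [H2 H3]]] dx.
  assert (Hn1 : 1 <= INR n) by (apply (le_INR 1); lia).
  assert (Hk1' : 1 <= INR k) by (apply (le_INR 1); lia).
  assert (Hkn' : INR k <= INR n) by (apply le_INR; lia).
  set (s := sqrt (INR n * INR k)) in *.
  assert (Hs0 : 0 < s) by (apply sqrt_lt_R0; nra).
  assert (Hsn : s <= INR n).
  { unfold s. apply Rle_trans with (sqrt (INR n * INR n)); [apply sqrt_le_1; nra | rewrite sqrt_square; lra]. }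
  assert (Hks : INR k <= s).
  { unfold s. apply Rle_trans with (sqrt (INR k * INR k)); [rewrite sqrt_square; lra | apply sqrt_le_1; nra]. }
  assert (Ht1 : tau >= 1).
  { rewrite Htau. apply Rle_ge. apply (Rmult_le_reg_r s); [lra|].
    unfold Rdiv; rewrite Rmult_assoc, Rinv_l by lra; lra. }
  assert (HkL : INR k * tau <= L).
  { rewrite Htau. unfold Rdiv. rewrite <- Rmult_assoc.
    apply (Rmult_le_reg_r s); [lra|]. rewrite Rmult_assoc, Rinv_l by lra. nra. }
  assert (HMt : INR M * tau = 2 * L + INR k * tau).
  { rewrite HM. field. lra. }
  assert (HM1 : (1 <= M)%nat).
  { apply INR_le. simpl. nra. }
  set (X := fun i m => fst (P i m)) in *.
  assert (FA : forall m, (1 <= m < M)%nat -> X 1%nat m <= X 1%nat (S m) /\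
     E 1%nat (S m) <= tau + 3 * tau * (X 1%nat (S m) - X 1%nat m)).
  { intros m Hm. pose proof (H1 (S m) ltac:(lia)) as Hu.
    replace (S m - 1)%nat with m in Hu by lia.
    exact (up_bound _ _ _ _ _ _ Hg Ht1 Hu). }
  assert (FB : forall i, (1 <= i < k)%nat -> X i 1%nat <= X (S i) 1%nat /\
     E (S i) 1%nat <= tau + 3 * tau * (X (S i) 1%nat - X i 1%nat)).
  { intros i Hi. pose proof (H2 (S i) ltac:(lia)) as Hu.
    replace (S i - 1)%nat with i in Hu by lia.
    exact (down_bound _ _ _ _ _ _ Hg Ht1 Hu). }
  assert (FC : forall i m, (1 <= i < k)%nat -> (1 <= m < M)%nat ->
     if Rlt_dec (fst (P (S i) m)) (fst (P i (S m)))
     then X i (S m) <= X (S i) (S m) /\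
          E (S i) (S m) <= tau + 3 * tau * (X (S i) (S m) - X i (S m))
     else X (S i) m <= X (S i) (S m) /\
          E (S i) (S m) <= tau + 3 * tau * (X (S i) (S m) - X (S i) m)).
  { intros i m Hi Hm. pose proof (H3 (S i) (S m) ltac:(lia) ltac:(lia)) as Hu.
    replace (S i - 1)%nat with i in Hu by lia.
    replace (S m - 1)%nat with m in Hu by lia.
    destruct (Rlt_dec _ _).
    - exact (down_bound _ _ _ _ _ _ Hg Ht1 Hu).
    - exact (up_bound _ _ _ _ _ _ Hg Ht1 Hu). }
  assert (Mm : forall i m, (1 <= i <= k)%nat -> (1 <= m < M)%nat -> X i m <= X i (S m)).
  { intros i m Hi Hm. destruct i as [|[|i']]; [lia| apply FA; lia|].
    pose proof (FC (S i') m ltac:(lia) Hm) as HC. unfold X in *.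
    destruct (Rlt_dec _ _); lra. }
  assert (Mi : forall i m, (1 <= i < k)%nat -> (1 <= m <= M)%nat -> X i m <= X (S i) m).
  { intros i m Hi Hm. destruct m as [|[|m']]; [lia| apply FB; lia|].
    pose proof (FC i (S m') Hi ltac:(lia)) as HC. unfold X in *.
    destruct (Rlt_dec _ _); lra. }
  assert (Eb : forall i m, (1 <= i <= k)%nat -> (1 <= m < M)%nat ->
     E i (S m) <= tau + 3 * tau * (X i (S m) - X i m)).
  { intros i m Hi Hm. destruct i as [|[|i']]; [lia| apply FA; lia|].
    pose proof (FC (S i') m ltac:(lia) Hm) as HC. unfold X in *.
    destruct (Rlt_dec _ _) as [r|r]; [|lra].
    destruct HC as [_ HC]. nra. }
  assert (C1 : forall i, (1 <= i <= k)%nat -> X 1%nat 1%nat <= X i 1%nat).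
  { induction i as [|i IH]; intros Hi; [lia|].
    destruct i as [|i]; [lra|].
    pose proof (Mi (S i) 1%nat ltac:(lia) ltac:(lia)). specialize (IH ltac:(lia)). lra. }
  assert (C2 : forall d i, (1 <= i)%nat -> (i + d <= k)%nat -> X i M <= X (i + d)%nat M).
  { induction d as [|d IH]; intros i Hi Hd.
    - rewrite Nat.add_0_r; lra.
    - pose proof (IH i Hi ltac:(lia)).
      pose proof (Mi (i + d)%nat M ltac:(lia) ltac:(lia)).
      replace (i + S d)%nat with (S (i + d)) by lia. lra. }
  split.
  - assert (RP : forall f i m, (1 <= i <= k)%nat -> (1 <= m <= M)%nat -> (i + m <= f + 2)%nat ->
       root_path_len f P E i m <= tau * (INR i + INR m - 2) + 3 * tau * (X i m - X 1%nat 1%nat)).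
    { induction f as [|f IH]; intros i m Hi Hm Hf.
      - assert (i = 1%nat) by lia. assert (m = 1%nat) by lia. subst. simpl. lra.
      - destruct i as [|[|i']]; [lia| |]; destruct m as [|[|m']]; try lia.
        + simpl. lra.
        + cbn [root_path_len andb Nat.eqb]. unfold parent. cbn [Nat.eqb fst snd Nat.sub].
          replace (m' - 0)%nat with m' by lia.
          pose proof (IH 1%nat (S m') ltac:(lia) ltac:(lia) ltac:(lia)).
          pose proof (FA (S m') ltac:(lia)). unfold X in *.
          rewrite !S_INR in *. simpl in *. lra.
        + cbn [root_path_len andb Nat.eqb]. unfold parent. cbn [Nat.eqb fst snd Nat.sub].
          replace (i' - 0)%nat with i' by lia.
          pose proof (IH (S i') 1%nat ltac:(lia) ltac:(lia) ltac:(lia)).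
          pose proof (FB (S i') ltac:(lia)). unfold X in *.
          rewrite !S_INR in *. simpl in *. lra.
        + cbn [root_path_len andb Nat.eqb]. unfold parent. cbn [Nat.eqb fst snd Nat.sub].
          replace (i' - 0)%nat with i' by lia.
          replace (m' - 0)%nat with m' by lia.
          pose proof (FC (S i') (S m') ltac:(lia) ltac:(lia)) as HC.
          destruct (Rlt_dec _ _); cbn [fst snd].
          * pose proof (IH (S i') (S (S m')) ltac:(lia) ltac:(lia) ltac:(lia)).
            unfold X in *. rewrite !S_INR in *. lra.
          * pose proof (IH (S (S i')) (S m') ltac:(lia) ltac:(lia) ltac:(lia)).
            unfold X in *. rewrite !S_INR in *. lra. }
    pose proof (RP (k + M)%nat k M ltac:(lia) ltac:(lia) ltac:(lia)).
    unfold dx. fold (X k M) (X 1%nat 1%nat). lra.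
  - set (g := fun i m => if andb (Nat.eqb i 1) (Nat.eqb m 1) then 0 else E i m).
    assert (Row : forall i, (1 <= i <= k)%nat -> forall j, (1 <= j <= M)%nat ->
       sumR (map (g i) (seq 1 j)) <= INR j * tau + 3 * tau * (X i j - X 1%nat 1%nat)).
    { intros i Hi. induction j as [|j IH]; intros Hj; [lia|].
      destruct j as [|j].
      - simpl. unfold g. destruct i as [|[|i']]; [lia|simpl; lra|].
        simpl. pose proof (FB (S i') ltac:(lia)). pose proof (C1 (S i') ltac:(lia)).
        unfold X in *. nra.
      - rewrite seq_S, map_app, sumR_app. specialize (IH ltac:(lia)).
        simpl (sumR (map (g i) [(1 + S j)%nat])).
        unfold g at 2. replace (1 + S j)%nat with (S (S j)) by lia.
        replace (Nat.eqb (S (S j)) 1) with false by reflexivity.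
        rewrite Bool.andb_false_r.
        pose proof (Eb i (S j) Hi ltac:(lia)).
        rewrite (S_INR (S j)). lra. }
    unfold total_len. fold g.
    eapply Rle_trans.
    + apply (sumR_map_le _ (INR M * tau + 3 * tau * dx)).
      intros i Hin. apply in_seq in Hin.
      pose proof (Row i ltac:(lia) M ltac:(lia)).
      pose proof (C2 (k - i)%nat i ltac:(lia) ltac:(lia)).
      replace (i + (k - i))%nat with k in * by lia.
      change (sumR (map (g i) (seq 1 M)) <= INR M * tau + 3 * tau * dx).
      unfold dx, X in *. nra.
    + rewrite seq_length. nra.
Qed.
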